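(* Let $n\ge2$ and let $Q$ be an $n$-pre-admissible quiver. Then there exists a flow path in $Q$ if and only if $Q\neq A_1$ and $Q\ne\tilde{A}_m$ for every $m\ge1$.
   Context: Quivers are finite and connected. $\delta(v)=(\delta^-(v),\delta^+(v))$ counts arrows ending/starting at $v$. $Q$ is $n$-pre-admissible if (i) every $\delta(v)\in\{(0,0),(0,1),(1,0),(1,1),(1,2),(2,1)\}$, with $(2,2)$ also allowed when $n=2$; (ii) at most one arrow from any vertex to any vertex; (iii) $\delta^+(v)+\delta^-(u)\le3$ for every arrow $v\to u$. A ($k$-)flow path ($k\ge2$) is a path $v_1\to v_2\to\cdots\to v_k$ in $Q$ such that $\delta(v_s)=(1,1)$ if and only if $1<s<k$. $A_1$ is the one-vertex quiver without arrows; $\tilde A_m$ is the oriented cycle $1\to\cdots\to m\to1$ (a loop if $m=1$). *)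

(* Defs.v *)
From mathcomp Require Import all_boot.
Set Implicit Arguments. Unset Strict Implicit. Unset Printing Implicit Defensive.

Record quiver := Quiver {
  qV : finType;
  qA : finType;
  qs : qA -> qV;
  qt : qA -> qV }.

Section QuiverDefs.
Variable Q : quiver.

Definition din (v : qV Q) : nat := #|[set a : qA Q | qt a == v]|.
Definition dout (v : qV Q) : nat := #|[set a : qA Q | qs a == v]|.

Definition adj : rel (qV Q) := fun u v =>
  [exists a : qA Q, ((qs a == u) && (qt a == v)) || ((qs a == v) && (qt a == u))].

Definition connected_quiver : Prop :=
  0 < #|qV Q| /\ forall u v : qV Q, connect adj u v.

Definition allowed_degree (n : nat) (d : nat * nat) : bool :=
  (d \in [:: (0,0); (0,1); (1,0); (1,1); (1,2); (2,1)]) || ((n == 2) && (d == (2,2))).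

Definition pre_admissible (n : nat) : Prop :=
  (forall v : qV Q, allowed_degree n (din v, dout v)) /\
  (forall u v : qV Q, #|[set a : qA Q | (qs a == u) && (qt a == v)]| <= 1) /\
  (forall a : qA Q, dout (qs a) + din (qt a) <= 3).

(* A path given by its first arrow a0 and the remaining arrows p;
   its vertex sequence is v_1 = s a0, then the targets of the arrows. *)
Definition path_vertices (a0 : qA Q) (p : seq (qA Q)) : seq (qV Q) :=
  qs a0 :: map (@qt Q) (a0 :: p).

Definition is_flow_path (a0 : qA Q) (p : seq (qA Q)) : Prop :=
  path (fun a b => qt a == qs b) a0 p /\
  let vs := path_vertices a0 p in
  forall i, i < size vs ->
    ((din (nth (qs a0) vs i) == 1) && (dout (nth (qs a0) vs i) == 1))
    = (0 < i < (size vs).-1).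

(* a flow path exists (k >= 2 means at least one arrow) *)
Definition has_flow_path : Prop :=
  exists (a0 : qA Q) (p : seq (qA Q)), is_flow_path a0 p.

End QuiverDefs.

Definition quiver_iso (Q1 Q2 : quiver) : Prop :=
  exists (f : qV Q1 -> qV Q2) (g : qA Q1 -> qA Q2),
    bijective f /\ bijective g /\
    (forall a, qs (g a) = f (qs a)) /\ (forall a, qt (g a) = f (qt a)).

Definition A1 : quiver := @Quiver unit void (fun a => match a with end)
                                              (fun a => match a with end).

Lemma ord_pos m (i : 'I_m) : 0 < m.
Proof. by apply: leq_ltn_trans (ltn_ord i). Qed.

Definition cyc_succ m (i : 'I_m) : 'I_m :=
  Ordinal (ltn_pmod i.+1 (ord_pos i)).

(* tilde A_m: oriented cycle 1 -> ... -> m -> 1 (loop if m = 1), for m >= 1;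
   arrow i goes from vertex i to vertex i+1 mod m *)
Definition Atilde (m : nat) : quiver :=
  @Quiver 'I_m 'I_m id (@cyc_succ m).

(* Main.v *)
Require Import Defs.
From mathcomp Require Import all_boot zify.
From Stdlib Require Import Classical.

Lemma card1_uniq (T : finType) (P : pred T) a b :
  #|[set x | P x]| = 1 -> P a -> P b -> a = b.
Proof.
move/eqP/cards1P=> [x Hx] Pa Pb.
have: a \in [set x | P x] by rewrite inE.
have: b \in [set x | P x] by rewrite inE.
by rewrite Hx !inE => /eqP -> /eqP ->.
Qed.

Lemma card_transport (Q1 Q2 : quiver) (f : qV Q1 -> qV Q2) (g : qA Q1 -> qA Q2)
  (h1 : qA Q1 -> qV Q1) (h2 : qA Q2 -> qV Q2) v :
  injective f -> bijective g -> (forall a, h2 (g a) = f (h1 a)) ->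
  #|[set a | h1 a == v]| = #|[set b | h2 b == f v]|.
Proof.
move=> fi [gi gK giK] H.
rewrite -(card_imset _ (can_inj gK)); apply: eq_card => b.
rewrite inE; apply/imsetP/idP.
- by case=> a; rewrite inE => /eqP <- ->; rewrite H.
- move=> hb; exists (gi b); last by rewrite giK.
  by rewrite inE -(inj_eq fi) -H giK.
Qed.

Lemma cyc_succ_inj m : injective (@cyc_succ m).
Proof.
move=> i j /(congr1 val) /=.
have E (k : 'I_m) : k.+1 %% m = if k.+1 == m then 0 else k.+1.
  case: eqP => [->|H]; first by rewrite modnn.
  by rewrite modn_small //; have := ltn_ord k; lia.
rewrite !E => H; apply: val_inj => /=.
have := ltn_ord i; have := ltn_ord j.
move: H; do 2 case: eqP => /=; lia.
Qed.

Lemma din_Atilde m (j : 'I_m) : @din (Atilde m) j = 1.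
Proof.
rewrite /din /=.
have ->: [set a : 'I_m | cyc_succ a == j] = (@cyc_succ m) @^-1: [set j].
  by apply/setP => b; rewrite !inE.
by rewrite card_preimset ?cards1 //; apply: cyc_succ_inj.
Qed.

Lemma dout_Atilde m (j : 'I_m) : @dout (Atilde m) j = 1.
Proof. by rewrite /dout /=; apply: (eq_card1 (x:=j)) => b; rewrite inE. Qed.

Lemma iso_deg (Q : quiver) m (v : qV Q) : quiver_iso Q (Atilde m) -> din v = 1 /\ dout v = 1.
Proof.
move=> [f [g [fb [gb [Hs Ht]]]]].
rewrite /din /dout (@card_transport Q (Atilde m) f g (@qt Q) (@qt (Atilde m)) v (bij_inj fb) gb Ht).
rewrite (@card_transport Q (Atilde m) f g (@qs Q) (@qs (Atilde m)) v (bij_inj fb) gb Hs).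
by have := @din_Atilde m (f v); have := @dout_Atilde m (f v); rewrite /din /dout => -> ->.
Qed.


Section Q.
Variable Q : quiver.
Implicit Types (v w : qV Q) (a : qA Q).

Definition is11 v := (din v == 1) && (dout v == 1).
Definition outa (d : qA Q) v := odflt d [pick a | qs a == v].

Lemma outaP d v : 0 < dout v -> qs (outa d v) = v.
Proof.
rewrite /outa; case: pickP => [a /eqP //|H].
by move=> /card_gt0P [a]; rewrite inE H.
Qed.

Lemma outa_uniq d v a : dout v = 1 -> qs a = v -> a = outa d v.
Proof.
move=> Hd Ha; apply: (@card1_uniq _ (fun a => qs a == v)) => //.
  by apply/eqP.
by rewrite outaP ?Hd.
Qed.

Lemma in_uniq v a b : din v = 1 -> qt a = v -> qt b = v -> a = b.
Proof.
move=> Hd Ha Hb; apply: (@card1_uniq _ (fun a => qt a == v)) => //; exact/eqP.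
Qed.

Section Walk.
Variables (w : qV Q) (Hw : ~~ is11 w) (Hd : 0 < dout w).

Lemma walk : has_flow_path Q.
Proof.
have [d _] := card_gt0P Hd.
pose nexta := outa d.
pose succ v := qt (nexta v).
pose y k := iter k succ w.
have yS k : y k.+1 = qt (nexta (y k)) by [].
have desc : (forall k, 0 < k -> is11 (y k)) ->
   forall i j, i < j -> y i = y j -> y 0 = y (j - i).
  move=> Hall; elim=> [|i IH] j ij E; first by rewrite subn0.
  case: j ij E => [//|j] ij E.
  rewrite yS yS in E.
  have E2 : nexta (y i) = nexta (y j).
    apply: (in_uniq (y i.+1)) => //.
      by move/andP: (Hall i.+1 isT) => [/eqP -> _].
  have: y i = y j.
    rewrite -(outaP d (y i)); last first.
      case: i {IH ij E E2} => [//|i]; by move/andP: (Hall i.+1 isT) => [_ /eqP ->].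
    rewrite -(outaP d (y j)); last first.
      by case: j ij E E2 => [//|j] _ _ _; move/andP: (Hall j.+1 isT) => [_ /eqP ->].
    by rewrite /nexta in E2; rewrite E2.
  rewrite subSS; apply: IH => //.
have Hex : exists k, (0 < k) && ~~ is11 (y k).
  case: (classic (exists k, (0 < k) && ~~ is11 (y k))) => // Hne.
  have Hall : forall k, 0 < k -> is11 (y k).
    move=> k k0; apply/negPn/negP => H; apply: Hne; exists k; by rewrite k0 H.
  exfalso.
  pose s := [seq y k.+1 | k <- iota 0 #|qV Q|.+1].
  have : ~~ uniq s.
    apply/negP => /card_uniqP Hu.
    have := max_card (mem s); rewrite Hu size_map size_iota; lia.
  case/(uniqPn w) => i [j [ij js]].
  rewrite size_map size_iota in js.
  rewrite (nth_map 0) ?size_iota; last lia.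
  rewrite (nth_map 0) ?size_iota; last lia.
  rewrite !nth_iota; try lia.
  rewrite !add0n => E.
  have := desc Hall _ _ _ E; rewrite subSS => /(_ ij) E2.
  by move: Hw; rewrite -[w]/(y 0) E2 Hall ?subn_gt0.
case: (ex_minnP Hex) => k /andP [k0 Hk] Hmin.
have Hmid : forall l, 0 < l -> l < k -> is11 (y l).
  move=> l l0 lk; apply/negPn/negP => H.
  by have := Hmin l; rewrite l0 H => /(_ isT); rewrite leqNgt lk.
have Hsrc : forall l, l < k -> qs (nexta (y l)) = y l.
  move=> l lk; apply: outaP; case: l lk => [//|l] lk.
  by move/andP: (Hmid l.+1 isT lk) => [_ /eqP ->].
case: k k0 Hk Hmin Hmid Hsrc => [//|k] _ Hk _ Hmid Hsrc.
exists (nexta (y 0)), [seq nexta (y l) | l <- iota 1 k].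
split.
  have : forall n l, l + n <= k -> path (fun a b => qt a == qs b) (nexta (y l)) [seq nexta (y i) | i <- iota l.+1 n].
    elim=> [//|n IH] l ln /=.
    rewrite -[succ (y l)]/(y l.+1) (IH l.+1); last lia.
    rewrite Hsrc; last lia.
    by rewrite andbT; apply/eqP.
  by move/(_ k 0 (leqnn _)).
rewrite /path_vertices.
have Hnth : forall i, i < k.+2 -> nth (qs (nexta (y 0))) (qs (nexta (y 0)) :: [seq qt i | i <- nexta (y 0) :: [seq nexta (y l) | l <- iota 1 k]]) i = y i.
  case=> [_|i ik] /=; first exact: (Hsrc 0 isT).
  case: i ik => [//|i] ik /=.
  rewrite (nth_map (nexta w)) ?size_map ?size_iota; last lia.
  rewrite (nth_map 0) ?size_iota; last lia.
  by rewrite nth_iota; last lia.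
move=> i; rewrite /= size_map size_map size_iota => ik.
rewrite Hnth //.
case: i ik => [_|i ik]; first by apply/negbTE.
case: (ltngtP i.+1 k.+1) => [lt|gt|eq].
- by have := Hmid i.+1 isT lt; rewrite /is11 => ->.
- lia.
- by rewrite andbF eq; apply/negbTE.
Qed.
End Walk.

Lemma sum_dout : \sum_(v : qV Q) dout v = #|qA Q|.
Proof.
rewrite -sum1_card (partition_big (@qs Q) predT) //=.
apply: eq_bigr => v _; rewrite /dout -sum1_card.
by apply: eq_bigl => a; rewrite inE.
Qed.

Lemma sum_din : \sum_(v : qV Q) din v = #|qA Q|.
Proof.
rewrite -sum1_card (partition_big (@qt Q) predT) //=.
apply: eq_bigr => v _; rewrite /din -sum1_card.
by apply: eq_bigl => a; rewrite inE.
Qed.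

Lemma cycle_iso : connected_quiver Q -> (forall v, din v = 1 /\ dout v = 1) ->
  exists m, 1 <= m /\ quiver_iso Q (Atilde m).
Proof.
move=> [HV Hconn] H11.
have [v0 _] := card_gt0P HV.
have [d _] : exists d, d \in [set a | qs a == v0].
  by apply/card_gt0P; rewrite -/(dout v0) (proj2 (H11 v0)).
pose succ v := qt (outa d v).
have Hs v : qs (outa d v) = v by rewrite outaP // (proj2 (H11 v)).
have Hu a : a = outa d (qs a) by apply: outa_uniq; rewrite ?(proj2 (H11 _)).
have sinj : injective succ.
  move=> u v E.
  have E2 : outa d u = outa d v.
    by apply: (in_uniq (succ u)); rewrite ?(proj1 (H11 _)).
  by rewrite -(Hs u) -(Hs v) E2.
have Hall v : fconnect succ v0 v.
  have Hsub : subrel (@adj Q) (fconnect succ).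
    move=> x z /existsP [a /orP [] /andP [/eqP Hx /eqP Hz]].
    by apply/connect1/eqP; rewrite /succ -Hx -Hu Hz.
  rewrite fconnect_sym //; apply/connect1/eqP; by rewrite /succ -Hx -Hu Hz.
  exact: (connect_sub Hsub (Hconn v0 v)).
set m := #|qV Q|.
have Hord : order succ v0 = m.
  by rewrite /order; apply: eq_card => v; rewrite [in RHS]unfold_in /= -[v \in _]/(fconnect succ v0 v) Hall.
have Hlt v : findex succ v0 v < m by rewrite -Hord; apply: findex_max.
pose f v : 'I_m := Ordinal (Hlt v).
pose finv (i : 'I_m) := iter i succ v0.
have fK : cancel f finv by move=> v; rewrite /finv /= iter_findex.
have fKi : cancel finv f.
  by move=> i; apply: val_inj; rewrite /= findex_iter // Hord.
have fS v : f (succ v) = cyc_succ (f v).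
  apply: val_inj => /=.
  set k := findex succ v0 v.
  have Ev : v = iter k succ v0 by rewrite iter_findex.
  rewrite Ev -iterS.
  have := Hlt v; rewrite -/k => klt.
  case: (ltngtP k.+1 m) => [lt|gt|eq].
  - by rewrite findex_iter ?Hord // modn_small.
  - lia.
  - by rewrite eq -{1}Hord iter_order // findex0 modnn.
exists m; split; first exact: HV.
exists f, (fun a => f (qs a)); split; first by exists finv.
split.
  exists (fun i => outa d (finv i)).
    by move=> a; rewrite fK -Hu.
  by move=> i; rewrite Hs fKi.
split=> // a /=.
by rewrite [in RHS](Hu a) -fS.
Qed.

End Q.
Arguments is11 {Q} v.

Theorem lemma2p13 (n : nat) (Q : quiver) :
  2 <= n -> connected_quiver Q -> pre_admissible Q n ->
  (has_flow_path Q <->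
   (~ quiver_iso Q A1 /\ forall m : nat, 1 <= m -> ~ quiver_iso Q (Atilde m))).
Proof.
move=> _ Hc _; split.
  case=> a0 [p [_ Hv]]; split.
    by case=> f [g _]; case: (g a0).
  move=> m _ Hiso; have [H1 H2] := iso_deg _ _ (qs a0) Hiso.
  by have := Hv 0 isT; rewrite /= H1 H2.
move=> [HA1 HAt].
case: (boolP [exists w : qV Q, ~~ is11 w && (0 < dout w)]) => [/existsP [w /andP [Hw Hd]]|HA].
  exact: (walk _ _ Hw Hd).
have Hout (w : qV Q) : ~~ is11 w -> dout w = 0.
  by move: HA => /existsPn /(_ w) => H1 H2; move: H1; rewrite H2 /= lt0n negbK => /eqP.
case: (boolP [exists w : qV Q, ~~ is11 w && (0 < din w)]) => [/existsP [w /andP [Hw Hd]]|HB].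
  exfalso.
  have Hle : \sum_(v | v != w) dout v <= \sum_(v | v != w) din v.
    apply: leq_sum => v _; case: (boolP (is11 v)) => [/andP[/eqP-> /eqP->] //|/Hout-> //].
  have : \sum_(v : qV Q) dout v < \sum_(v : qV Q) din v.
    rewrite (bigD1 w) //= [X in _ < X](bigD1 w) //= Hout //; lia.
  by rewrite (sum_dout Q) (sum_din Q) ltnn.
have Hin (w : qV Q) : ~~ is11 w -> din w = 0.
  by move: HB => /existsPn /(_ w) => H1 H2; move: H1; rewrite H2 /= lt0n negbK => /eqP.
case: (boolP [exists w : qV Q, ~~ is11 w]) => [/existsP [w Hw]|HC].
  exfalso; apply: HA1.
  have Hadj v : adj w v = false.
    apply/negbTE/negP => /existsP [a /orP [] /andP [/eqP Hx /eqP Hz]].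
      have := Hout w Hw; rewrite /dout => /eqP; rewrite cards_eq0 => /eqP E.
      have: a \in [set a | qs a == w] by rewrite inE Hx.
      by rewrite E inE.
    have := Hin w Hw; rewrite /din => /eqP; rewrite cards_eq0 => /eqP E.
    have: a \in [set a | qt a == w] by rewrite inE Hz.
    by rewrite E inE.
  have Hallw v : v = w.
    have := (proj2 Hc) w v; case/connectP => [[|x p] /= Hp ->] //.
    by move: Hp; rewrite Hadj.
  have Hno (a : qA Q) : False.
    have := Hout w Hw; rewrite /dout => /eqP; rewrite cards_eq0 => /eqP E.
    have: a \in [set a | qs a == w] by rewrite inE (Hallw (qs a)).
    by rewrite E inE.
  exists (fun _ => tt), (fun a => False_rect void (Hno a)).
  split; first by exists (fun _ => w) => [v|[]] //; rewrite -(Hallw v).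
  split; first by exists (fun x : void => match x with end) => [a|[]]; case: (Hno a).
  by split=> a; case: (Hno a).
have [m [m1 Hiso]] : exists m, 1 <= m /\ quiver_iso Q (Atilde m).
  apply: (cycle_iso _ Hc) => v.
  by move: HC => /existsPn /(_ v); rewrite negbK => /andP [/eqP -> /eqP ->].
by exfalso; exact: HAt m m1 Hiso.
Qed.
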